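(* Let $g:\mathbb{R}\to\mathbb{R}$ be continuously differentiable, even ($g(x)=g(-x)$ for all $x$) and $\pi$-periodic ($g(x+\pi)=g(x)$ for all $x$). Let $n\ge 1$ and for $\vec{\mu}=(\mu_0,\dots,\mu_{n-1})\in\mathbb{R}^n$ define $$G(\vec{\mu})=\frac{1}{\pi}\int_{-\pi/2}^{\pi/2}\prod_{i=0}^{n-1} g(x+\mu_i)\,dx.$$ For $i\in\{0,\dots,n-1\}$ let $\mathcal{N}_i=\{0,\dots,n-1\}\setminus\{i\}$. Then for every $i$ and every $\vec\mu$, $$\frac{\partial G}{\partial \mu_i}(\vec{\mu})=\frac{1}{2\pi}\int_{-\pi/2}^{\pi/2} g'(x)\Big\{\prod_{j\in\mathcal{N}_i} g(x+\mu_j-\mu_i)-\prod_{j\in\mathcal{N}_i} g(x-\mu_j+\mu_i)\Big\}\,dx.$$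
   Context: $g(x)$ models the probability of not detecting a target observed at angle $x$; $G(\vec\mu)$ is the average (over a uniformly distributed target orientation) probability of no detection after $n$ independent observations at relative angles $\mu_0,\dots,\mu_{n-1}$. *)

(* Defs.v *)
From Stdlib Require Import Reals List Arith.
From Coquelicot Require Import Coquelicot.
Open Scope R_scope.

Definition prodR (l : list nat) (f : nat -> R) : R :=
  fold_right Rmult 1 (map f l).

Definition idx (n : nat) : list nat := seq 0 n.

Definition idx_except (n i : nat) : list nat :=
  filter (fun j => negb (Nat.eqb j i)) (seq 0 n).

(* a vector mu in R^n is represented by mu : nat -> R, only entries 0..n-1 matter *)
Definition update (mu : nat -> R) (i : nat) (t : R) : nat -> R :=
  fun j => if Nat.eqb j i then t else mu j.

Definition Gfun (g : R -> R) (n : nat) (mu : nat -> R) : R :=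
  / PI * RInt (fun x => prodR (idx n) (fun i => g (x + mu i))) (- (PI / 2)) (PI / 2).

(* Main.v *)
Require Import Defs.
From Stdlib Require Import Reals List Arith Lia Lra.
From Coquelicot Require Import Coquelicot.
Open Scope R_scope.

Lemma prodR_app l1 l2 f : prodR (l1++l2) f = prodR l1 f * prodR l2 f.
Proof. induction l1 as [|x l IH]; unfold prodR in *; simpl; [ring|rewrite IH; ring]. Qed.

Lemma prodR_ext l f h : (forall j, In j l -> f j = h j) -> prodR l f = prodR l h.
Proof. induction l as [|x l IH]; intros H; unfold prodR in *; simpl; auto.
  rewrite H by (left; auto). rewrite IH; auto. intros; apply H; right; auto. Qed.

Lemma filter_all l i : (forall j, In j l -> j <> i) -> filter (fun j => negb (Nat.eqb j i)) l = l.
Proof. induction l as [|x l IH]; intros H; simpl; auto.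
  destruct (Nat.eqb_spec x i). exfalso; apply (H x); auto; left; auto.
  simpl. rewrite IH; auto. intros; apply H; right; auto. Qed.

Lemma prodR_split n i f : (i<n)%nat -> prodR (idx n) f = f i * prodR (idx_except n i) f.
Proof.
  induction n as [|n IH]; intros Hi; [lia|].
  unfold idx, idx_except in *. rewrite seq_S, filter_app, !prodR_app. simpl.
  destruct (Nat.eqb_spec n i).
  - subst. simpl. rewrite filter_all. unfold prodR; simpl; ring.
    intros j Hj; apply in_seq in Hj; lia.
  - rewrite IH by lia. unfold prodR; simpl; ring.
Qed.

Lemma prodR_cont l (F : nat -> R -> R) x : (forall j, continuous (F j) x) ->
  continuous (fun y => prodR l (fun j => F j y)) x.
Proof. intros H; induction l as [|a l IH]; unfold prodR in *; simpl.
  apply continuous_const.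
  apply (continuous_mult (F a) (fun y => fold_right Rmult 1 (map (fun j => F j y) l))); auto.
Qed.

Lemma RInt_shift (f : R -> R) c a b : (forall x, continuous f x) ->
  RInt (fun y => f (y + c)) a b = RInt f (a + c) (b + c).
Proof. intros H.
  assert (E := RInt_comp_lin f 1 c a b (ex_RInt_continuous _ _ _ (fun z _ => H z))).
  replace (1*a+c) with (a+c) in E by ring. replace (1*b+c) with (b+c) in E by ring.
  rewrite <- E. apply RInt_ext. intros. unfold scal; simpl; unfold mult; simpl. rewrite Rmult_1_l. f_equal. ring.
Qed.

Lemma per_shift (h : R -> R) a m : (forall x, continuous h x) -> (forall x, h (x+PI) = h x) ->
  RInt h (a+m) (a+PI+m) = RInt h a (a+PI).
Proof. intros Hc Hp.
  assert (ex : forall u v, ex_RInt h u v) by (intros; apply (ex_RInt_continuous (V:=R_CompleteNormedModule)); auto).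
  rewrite <- (RInt_Chasles h (a+m) (a+PI) (a+PI+m)) by auto.
  replace (a+PI) with (a + PI) by ring.
  replace (a+PI+m) with ((a+m)+PI) by ring.
  rewrite <- RInt_shift by auto.
  rewrite (RInt_ext (fun y => h (y+PI)) h) by (intros; apply Hp).
  rewrite Rplus_comm. change (plus (RInt h a (a+m)) (RInt h (a+m) (a+PI)) = RInt h a (a+PI)).
  apply RInt_Chasles; auto.
Qed.
Lemma dper (g : R -> R) (g_diff : forall x, ex_derive g x) (g_per : forall x, g (x + PI) = g x) x :
  Derive g (x+PI) = Derive g x.
Proof.
  symmetry. apply is_derive_unique.
  apply (is_derive_ext (fun y => g (y + PI))). intros; apply g_per.
  auto_derive. apply g_diff. change (fun x0 : R => g x0) with g. ring.
Qed.
Lemma dodd (g : R -> R) (g_diff : forall x, ex_derive g x) (g_even : forall x, g x = g (- x)) x :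
  Derive g (-x) = - Derive g x.
Proof.
  assert (H : Derive g x = - Derive g (-x)).
  apply is_derive_unique.
  apply (is_derive_ext (fun y => g (- y))). intros; symmetry; apply g_even.
  auto_derive. apply g_diff. change (fun x0 : R => g x0) with g. ring.
  lra.
Qed.
Lemma dlem (g : R -> R) (g_diff : forall x, ex_derive g x) x c m :
  Derive (fun u => g (x+u) * c) m = Derive g (x+m) * c.
Proof. apply is_derive_unique. auto_derive. apply g_diff. change (fun x0 : R => g x0) with g. ring. Qed.

Theorem lemma3p1 (g : R -> R)
  (g_diff : forall x, ex_derive g x)
  (g'_cont : forall x, continuous (Derive g) x)
  (g_even : forall x, g x = g (- x))
  (g_per : forall x, g (x + PI) = g x)
  (n : nat) (hn : (1 <= n)%nat) (i : nat) (hi : (i < n)%nat) (mu : nat -> R) :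
  is_derive (fun t => Gfun g n (update mu i t)) (mu i)
    (/ (2 * PI) * RInt (fun x => Derive g x *
        (prodR (idx_except n i) (fun j => g (x + mu j - mu i))
         - prodR (idx_except n i) (fun j => g (x - mu j + mu i))))
      (- (PI / 2)) (PI / 2)).
Proof.
  set (N := idx_except n i). set (m := mu i).
  set (P := fun x => prodR N (fun j => g (x + mu j))).
  set (Q := fun y => prodR N (fun j => g (y + mu j - m))).
  set (Rr := fun y => prodR N (fun j => g (y - mu j + m))).
  set (h := fun y => Derive g y * Q y).
  set (a := - (PI/2)). set (b := PI/2).
  assert (gc : forall x, continuous g x) by (intros; apply (ex_derive_continuous (K:=R_AbsRing) (V:=R_NormedModule)); auto).
  assert (gsc : forall c x, continuous (fun y => g (y + c)) x).
  { intros c x. apply (continuous_comp (fun y => y + c) g).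
    apply (continuous_plus (fun y : R => y) (fun _ => c)); [apply continuous_id|apply continuous_const].
    apply gc. }
  assert (Pc : forall x, continuous P x).
  { intros x; unfold P. apply (prodR_cont N (fun j y => g (y + mu j))). intros; apply gsc. }
  assert (Qc : forall x, continuous Q x).
  { intros x; unfold Q. apply (prodR_cont N (fun j y => g (y + mu j - m))). intros j.
    apply (continuous_ext (fun y => g (y + (mu j - m)))). intros; f_equal; ring. apply gsc. }
  assert (hc : forall x, continuous h x).
  { intros x; unfold h. apply (continuous_mult (Derive g) Q); auto. }
  assert (exh : forall u v, ex_RInt h u v) by (intros; apply (ex_RInt_continuous (V:=R_CompleteNormedModule)); auto).
  apply (is_derive_ext (fun t => / PI * RInt (fun x => g (x + t) * P x) a b)).
  { intros t. unfold Gfun. f_equal. apply RInt_ext. intros x _.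
    rewrite (prodR_split n i) by auto. unfold update at 1. rewrite Nat.eqb_refl.
    f_equal. apply prodR_ext. intros j Hj. unfold N, idx_except in Hj.
    apply filter_In in Hj. destruct Hj as [_ Hj]. unfold update.
    destruct (Nat.eqb j i); simpl in Hj; [discriminate|reflexivity]. }
  assert (HB : is_derive (fun t => RInt (fun x => g (x + t) * P x) a b) m
                 (RInt (fun x => Derive g (x + m) * P x) a b)).
  { assert (E : RInt (fun x => Derive g (x+m) * P x) a b = RInt (fun t => Derive (fun u => g (t+u) * P t) m) a b).
    { apply RInt_ext; intros; symmetry; apply dlem; auto. }
    rewrite E.
    apply (is_derive_RInt_param (fun u t => g (t+u) * P t) a b m).
    - apply filter_forall. intros u t _. auto_derive. apply g_diff.
    - intros t _. apply (continuity_2d_pt_ext (fun u v => Derive g (v+u) * P v)).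
      { intros; symmetry; apply dlem; auto. }
      apply continuity_2d_pt_mult.
      + apply (continuity_1d_2d_pt_comp (Derive g) (fun u v => v + u)).
        apply continuity_pt_filterlim, g'_cont.
        apply continuity_2d_pt_plus; [apply continuity_2d_pt_id2|apply continuity_2d_pt_id1].
      + apply (continuity_1d_2d_pt_comp P (fun u v => v)).
        apply continuity_pt_filterlim, Pc. apply continuity_2d_pt_id2.
    - apply filter_forall. intros u. apply (ex_RInt_continuous (V:=R_CompleteNormedModule)).
      intros z _. apply (continuous_mult (fun t => g (t+u)) P); auto. }
  assert (PI0 : PI <> 0) by apply PI_neq0.
  assert (Rrc : forall x, continuous Rr x).
  { intros x; unfold Rr. apply (prodR_cont N (fun j y => g (y - mu j + m))). intros j.
    apply (continuous_ext (fun y => g (y + (- mu j + m)))). intros; f_equal; ring. apply gsc. }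
  assert (exr : forall u v, ex_RInt (fun x => Derive g x * Rr x) u v).
  { intros; apply (ex_RInt_continuous (V:=R_CompleteNormedModule)); intros.
    apply (continuous_mult (Derive g) Rr); auto. }
  assert (I1 : RInt (fun x => Derive g (x+m) * P x) a b = RInt h a b).
  { rewrite (RInt_ext _ (fun x => h (x+m))).
    2:{ intros x _; unfold h, Q, P. f_equal. apply prodR_ext; intros; f_equal; ring. }
    rewrite RInt_shift by exact hc.
    replace b with (a + PI) by (unfold a, b; field).
    apply per_shift; [exact hc|].
    intros y; unfold h, Q. rewrite (dper g g_diff g_per). f_equal. apply prodR_ext; intros j _.
    replace (y+PI+mu j - m) with ((y+mu j-m)+PI) by ring. apply g_per. }
  assert (I2 : RInt (fun x => Derive g x * Rr x) a b = - RInt h a b).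
  { rewrite (RInt_ext _ (fun y => opp (h (-y)))).
    2:{ intros x _. change (opp (h (-x))) with (- h (-x)). unfold h, Q, Rr. rewrite (dodd g g_diff g_even).
        rewrite (prodR_ext N (fun j => g (x - mu j + m)) (fun j => g (- x + mu j - m))). rewrite Ropp_mult_distr_l, Ropp_involutive; reflexivity.
        intros j _. rewrite g_even. f_equal; ring. }
    assert (E2 : RInt (fun y => opp (h (-y))) a b = RInt h (-a) (-b)).
    { apply is_RInt_unique. apply (is_RInt_comp_opp (V:=R_NormedModule) h).
      apply (RInt_correct (V:=R_CompleteNormedModule)), exh. }
    rewrite E2.
    replace (-a) with b by (unfold a, b; ring). replace (-b) with a by (unfold a, b; ring).
    rewrite <- opp_RInt_swap by apply exh. reflexivity. }
  replace (/ (2 * PI) * RInt _ (- (PI / 2)) (PI / 2)) with (/ PI * RInt (fun x => Derive g (x + m) * P x) a b).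
  { apply is_derive_scal, HB. }
  rewrite (RInt_ext (fun x => Derive g x * (Q x - Rr x)) (fun x => minus (h x) (Derive g x * Rr x))).
  2:{ intros x _. change (minus (h x) (Derive g x * Rr x)) with (h x + - (Derive g x * Rr x)). unfold h, Q, Rr, m.
      assert (L : forall A B C : R, A*B + -(A*C) = A*(B-C)) by (intros; ring). symmetry; apply L. }
  fold a b. rewrite I1.
  transitivity (/ (2*PI) * (RInt h a b - RInt (fun x => Derive g x * Rr x) a b)).
  { rewrite I2. field; auto. }
  f_equal. symmetry. exact (RInt_minus (V:=R_CompleteNormedModule) h (fun x => Derive g x * Rr x) a b (exh a b) (exr a b)).
Qed.
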